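(* Let $G$ be a graph on $[n]$ and $p$ in the Shearer region $\mathcal S$ of $G$. Then for every $S\subseteq[n]$, $$\sum_{J\subseteq S}\frac{q_J(p)}{q_\emptyset(p)}\le\prod_{j\in S}\Big(1+\frac{q_{\{j\}}(p)}{q_\emptyset(p)}\Big).$$
   Context: Shearer notation: $\mathrm{Ind}$ is the family of independent sets of $G$ (including $\emptyset$); for $p\in\mathbb R^n$ and $I\subseteq[n]$, $p^I=\prod_{i\in I}p_i$. For $S\subseteq[n]$, $q_S(p)=\sum_{I\in\mathrm{Ind},\,S\subseteq I}(-1)^{|I\setminus S|}p^I$ (so $q_S=0$ if $S\notin\mathrm{Ind}$) and $\breve q_S(p)=\sum_{I\in\mathrm{Ind},\,I\subseteq S}(-1)^{|I|}p^I$. The Shearer region is $\mathcal S=\{p\in(0,1)^n:\breve q_S(p)>0\ \forall S\subseteq[n]\}$, which equals $\{p\in(0,1)^n: q_I(p)>0\ \forall I\in\mathrm{Ind}\}$. *)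

(* Defs.v *)
From HB Require Import structures.
From mathcomp Require Import all_boot all_order all_algebra.
Set Implicit Arguments. Unset Strict Implicit. Unset Printing Implicit Defensive.
Import Order.TTheory GRing.Theory Num.Theory.
Local Open Scope ring_scope.

Definition simple_graph (n : nat) (e : rel 'I_n) : Prop :=
  symmetric e /\ irreflexive e.

Definition indep (n : nat) (e : rel 'I_n) (I : {set 'I_n}) : bool :=
  [forall i in I, forall j in I, ~~ e i j].

Definition pw (R : nzRingType) (n : nat) (p : 'I_n -> R) (I : {set 'I_n}) : R :=
  \prod_(i in I) p i.

Definition qS (R : nzRingType) (n : nat) (e : rel 'I_n) (p : 'I_n -> R)
  (S : {set 'I_n}) : R :=
  \sum_(I : {set 'I_n} | indep e I && (S \subset I)) (-1) ^+ #|I :\: S| * pw p I.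

Definition qbreve (R : nzRingType) (n : nat) (e : rel 'I_n) (p : 'I_n -> R)
  (S : {set 'I_n}) : R :=
  \sum_(I : {set 'I_n} | indep e I && (I \subset S)) (-1) ^+ #|I| * pw p I.

Definition shearer (R : realFieldType) (n : nat) (e : rel 'I_n) (p : 'I_n -> R) : Prop :=
  (forall i, 0 < p i < 1) /\ (forall S : {set 'I_n}, 0 < qbreve e p S).

(* Main.v *)
Require Import Defs.
From HB Require Import structures.
From mathcomp Require Import all_boot all_order all_algebra.
Import Order.TTheory GRing.Theory Num.Theory.
Local Open Scope ring_scope.

Lemma sub_notin (T : finType) (J X : {set T}) k :
  k \notin X -> (J \subset k |: X) && (k \notin J) = (J \subset X).
Proof.
move=> kX; apply/idP/idP.
- case/andP=> /subsetP JkX kJ; apply/subsetP=> x xJ.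
  have := JkX x xJ; case/setU1P=> // xk; by rewrite -xk xJ in kJ.
- move=> JX; rewrite (subset_trans JX) ?subsetUr //=.
  by apply/negP=> kJ; rewrite (subsetP JX _ kJ) in kX.
Qed.

Lemma sum_subU1 (T : finType) (V : nmodType) (F : {set T} -> V) (X : {set T}) (k : T) :
  k \notin X ->
  \sum_(J : {set T} | J \subset k |: X) F J =
  \sum_(J : {set T} | J \subset X) F J + \sum_(J : {set T} | J \subset X) F (k |: J).
Proof.
move=> kX; rewrite (bigID (fun J : {set T} => k \in J)) /= addrC.
congr (_ + _).
  by apply: eq_bigl => J; rewrite sub_notin.
rewrite (reindex_onto (fun J : {set T} => k |: J) (fun I : {set T} => I :\ k)) /=.
  apply: eq_bigl => J; apply/idP/idP.
  - case/andP=> /andP [JX _] /eqP JJ.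
    have kJ : k \notin J by rewrite -JJ setD11.
    rewrite -(@sub_notin _ J _ _ kX) kJ andbT.
    by apply: subset_trans JX; rewrite subsetUr.
  - move=> JX; have kJ : k \notin J.
      by apply/negP=> kJ; rewrite (subsetP JX _ kJ) in kX.
    by rewrite setUS //= setU11 /= setU1K.
by move=> I /andP [_ kI]; rewrite setD1K.
Qed.

Lemma alt_sum (R : nzRingType) (T : finType) (A : {set T}) :
  \sum_(J : {set T} | J \subset A) (-1) ^+ #|J| = (A == set0)%:R :> R.
Proof.
have [->|[k kA]] := set_0Vmem A.
  rewrite eqxx (eq_bigl (pred1 set0)); last by move=> J; rewrite subset0.
  by rewrite big_pred1_eq cards0 expr0.
have -> : (A == set0) = false by apply/negP=> /eqP A0; rewrite A0 inE in kA.
rewrite -(setD1K kA) sum_subU1 ?setD11 //.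
rewrite -[X in X + _]opprK addrC -sumrN; apply/eqP; rewrite subr_eq0; apply/eqP.
apply: eq_bigr => J JA.
have kJ : k \notin J.
  by apply/negP=> kJ; have := subsetP JA _ kJ; rewrite setD11.
by rewrite cardsU1 kJ exprS mulN1r.
Qed.

Lemma sign_sub (R : nzRingType) (T : finType) (I J : {set T}) :
  J \subset I -> (-1) ^+ #|I :\: J| = (-1) ^+ #|I| * (-1) ^+ #|J| :> R.
Proof.
move=> JI; rewrite cardsD (setIidPr JI).
have le := subset_leq_card JI.
rewrite -{2}(subnK le) exprD -mulrA -expr2 sqrr_sign mulr1.
by [].
Qed.

Lemma qS0 (R : nzRingType) n (e : rel 'I_n) (p : 'I_n -> R) :
  qS e p set0 = qbreve e p setT.
Proof.
rewrite /qS /qbreve; apply: eq_big => I; first by rewrite sub0set subsetT.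
by rewrite setD0.
Qed.

Lemma sum_qS (R : comNzRingType) n (e : rel 'I_n) (p : 'I_n -> R) (S : {set 'I_n}) :
  \sum_(J : {set 'I_n} | J \subset S) qS e p J = qbreve e p (~: S).
Proof.
rewrite /qS /qbreve.
rewrite (exchange_big_dep (fun I : {set 'I_n} => indep e I)); last first.
  by move=> J I _ /andP [].
rewrite /= big_mkcondr; apply: eq_bigr => I indI.
rewrite (eq_bigl (fun J : {set 'I_n} => J \subset S :&: I)); last first.
  by move=> J; rewrite subsetI indI.
rewrite (eq_bigr (fun J : {set 'I_n} => (-1) ^+ #|I| * pw p I * (-1) ^+ #|J|)); last first.
  move=> J; rewrite subsetI => /andP [_ JI]; rewrite sign_sub //.
  by rewrite mulrAC.
rewrite -mulr_sumr alt_sum setIC setI_eq0 disjoints_subset.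
by case: ifP => _; rewrite ?mulr1 ?mulr0.
Qed.

Lemma indepP n (e : rel 'I_n) (I : {set 'I_n}) :
  reflect (forall i j, i \in I -> j \in I -> ~~ e i j) (indep e I).
Proof.
apply: (iffP forallP) => H.
  move=> i j iI jI; have := H i; rewrite iI /= => /forallP /(_ j).
  by rewrite jI.
by move=> i; apply/implyP=> iI; apply/forallP=> j; apply/implyP=> jI; apply: H.
Qed.

Definition Nb {n} (e : rel 'I_n) (k : 'I_n) : {set 'I_n} := [set i | e k i].

Lemma indepU1 n (e : rel 'I_n) (J : {set 'I_n}) (k : 'I_n) :
  simple_graph e -> k \notin J ->
  indep e (k |: J) = indep e J && [disjoint J & Nb e k].
Proof.
move=> [sym irr] kJ; apply/idP/idP.
- move/indepP=> H; apply/andP; split.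
    by apply/indepP=> i j iJ jJ; apply: H; rewrite setU1r.
  rewrite disjoints_subset; apply/subsetP=> i iJ; rewrite !inE.
  by apply: H; rewrite ?setU11 ?setU1r.
- case/andP=> /indepP H; rewrite disjoints_subset => /subsetP D.
  apply/indepP=> i j /setU1P [->|iJ] /setU1P [->|jJ].
  + by rewrite irr.
  + by have := D j jJ; rewrite !inE.
  + by rewrite sym; have := D i iJ; rewrite !inE.
  + exact: H.
Qed.

Definition hh {R : nzRingType} {n} (e : rel 'I_n) (p : 'I_n -> R) (I : {set 'I_n}) : R :=
  if indep e I then (-1) ^+ #|I| * pw p I else 0.

Lemma qbreveE (R : nzRingType) n (e : rel 'I_n) (p : 'I_n -> R) (W : {set 'I_n}) :
  qbreve e p W = \sum_(I : {set 'I_n} | I \subset W) hh e p I.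
Proof.
rewrite /qbreve (eq_bigl (fun I : {set 'I_n} => (I \subset W) && indep e I)).
  by rewrite big_mkcondr.
by move=> I; rewrite andbC.
Qed.

Lemma qrec (R : comNzRingType) n (e : rel 'I_n) (p : 'I_n -> R) (W : {set 'I_n}) k :
  simple_graph e -> k \notin W ->
  qbreve e p (k |: W) = qbreve e p W - p k * qbreve e p (W :\: Nb e k).
Proof.
move=> sg kW; rewrite !qbreveE sum_subU1 //; congr (_ + _).
rewrite mulr_sumr -sumrN; symmetry.
rewrite (eq_bigl (fun I : {set 'I_n} => (I \subset W) && [disjoint I & Nb e k])); last first.
  by move=> I; rewrite subsetD.
rewrite big_mkcondr; apply: eq_bigr => J JW.
have kJ : k \notin J by apply/negP=> kJ; rewrite (subsetP JW _ kJ) in kW.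
rewrite /hh indepU1 // /pw big_setU1 //= cardsU1 kJ.
case: (indep e J); case: [disjoint J & Nb e k] => /=; rewrite ?mulr0 ?oppr0 //.
by rewrite exprS mulN1r mulNr mulrCA.
Qed.

From mathcomp Require Import lra.

Lemma mono (R : realFieldType) n (e : rel 'I_n) (p : 'I_n -> R) :
  simple_graph e -> (forall i, 0 < p i) -> (forall W, 0 < qbreve e p W) ->
  forall m (W : {set 'I_n}), (#|W| <= m)%N -> forall (W' : {set 'I_n}) k, W' \subset W -> k \notin W ->
  qbreve e p (k |: W) * qbreve e p W' <= qbreve e p (k |: W') * qbreve e p W.
Proof.
move=> sg pp fp; elim=> [|m IH] W hW W' k sWW kW.
  move: hW; rewrite leqn0 cards_eq0 => /eqP W0.
  by move: sWW; rewrite W0 subset0 => /eqP ->.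
have [->|neq] := eqVneq W' W; first by [].
have : W' \proper W by rewrite properEneq neq.
case/properP=> _ [j jW jW'].
set V := W :\ j.
have WV : W = j |: V by rewrite /V setD1K.
have jV : j \notin V by rewrite /V setD11.
have hV : (#|V| <= m)%N.
  by move: hW; rewrite (cardsD1 j W) jW.
have sWV : W' \subset V by rewrite /V subsetD1 sWW jW'.
have kV : k \notin V by apply/negP=> kV; rewrite WV setU1r in kW.
have IH1 := IH V hV W' k sWV kV.
have loc : qbreve e p (k |: W) * qbreve e p V <= qbreve e p (k |: V) * qbreve e p W.
  rewrite !qrec //.
  suff : qbreve e p (V :\: Nb e k) * qbreve e p W <= qbreve e p (W :\: Nb e k) * qbreve e p V.
    by have := pp k; nra.
  case ekj: (e k j).
  + have -> : W :\: Nb e k = V :\: Nb e k.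
      by apply/setP=> x; rewrite WV !inE; case: eqP => // ->; rewrite ekj.
    apply: ler_wpM2l; first exact: ltW.
    rewrite WV qrec //; have := pp j; have := fp (V :\: Nb e j); nra.
  + have -> : W :\: Nb e k = j |: (V :\: Nb e k).
      apply/setP=> x; rewrite WV !inE; case: eqP => // ->; rewrite ekj //.
    have := IH V hV (V :\: Nb e k) j (subsetDl _ _) jV.
    by rewrite -WV mulrC [X in _ <= X]mulrC.
have := fp V; have := fp W'; have := fp (k |: W); have := fp (k |: V); have := fp (k |: W'); have := fp W.
nra.
Qed.

From mathcomp Require Import ring.

Lemma sum_sub0 (T : finType) (V : nmodType) (F : {set T} -> V) :
  \sum_(J : {set T} | J \subset set0) F J = F set0.
Proof.
rewrite (eq_bigl (pred1 set0)); last by move=> J; rewrite subset0.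
by rewrite big_pred1_eq.
Qed.

Lemma ratio_main (R : realFieldType) n (e : rel 'I_n) (p : 'I_n -> R) :
  simple_graph e -> (forall i, 0 < p i) -> (forall W, 0 < qbreve e p W) ->
  forall m (S : {set 'I_n}), (#|S| <= m)%N ->
  qbreve e p (~: S) / qbreve e p setT <=
  \prod_(j in S) (qbreve e p (~: [set j]) / qbreve e p setT).
Proof.
move=> sg pp fp; have tp := fp setT.
elim=> [|m IH] S hS.
  move: hS; rewrite leqn0 cards_eq0 => /eqP ->.
  by rewrite big_set0 setC0 divff // gt_eqF.
have [->|[j jS]] := set_0Vmem S.
  by rewrite big_set0 setC0 divff // gt_eqF.
rewrite (big_setD1 j jS) /=.
set S' := S :\ j.
have hS' : (#|S'| <= m)%N by move: hS; rewrite (cardsD1 j S) jS.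
have IH1 := IH S' hS'.
have key : qbreve e p (~: S) / qbreve e p setT <=
   qbreve e p (~: [set j]) / qbreve e p setT * (qbreve e p (~: S') / qbreve e p setT).
  have M := @mono R n e p sg pp fp _ (~: [set j]) (leqnn _) (~: S) j.
  have E1 : j |: ~: [set j] = setT.
    by apply/setP=> x; rewrite !inE; case: eqP.
  have E2 : j |: ~: S = ~: S'.
    by apply/setP=> x; rewrite /S' !inE; case: eqP => // ->.
  rewrite E1 E2 in M.
  have h1 : ~: S \subset ~: [set j] by rewrite setCS sub1set.
  have h2 : j \notin ~: [set j] by rewrite !inE eqxx.
  have M' := M h1 h2.
  set t := qbreve e p setT in M' tp *.
  have -> : qbreve e p (~: S) / t = (t * qbreve e p (~: S)) / (t * t).
    by field; rewrite gt_eqF.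
  have -> : qbreve e p (~: [set j]) / t * (qbreve e p (~: S') / t)
      = (qbreve e p (~: S') * qbreve e p (~: [set j])) / (t * t).
    by field; rewrite gt_eqF.
  apply: ler_wpM2r => //; rewrite invr_ge0; apply: ltW; exact: mulr_gt0.
apply: (le_trans key); apply: ler_wpM2l.
  by apply: ltW; apply: divr_gt0.
exact: IH1.
Qed.

Theorem mainTheorem12 (R : realFieldType) (n : nat) (e : rel 'I_n)
  (p : 'I_n -> R) :
  simple_graph e -> shearer e p ->
  forall S : {set 'I_n},
    \sum_(J : {set 'I_n} | J \subset S) qS e p J / qS e p set0
      <= \prod_(j in S) (1 + qS e p [set j] / qS e p set0).
Proof.
move=> sg [pr fp] S.
have pp : forall i, 0 < p i by move=> i; case/andP: (pr i).
have tp := fp setT.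
rewrite -mulr_suml sum_qS qS0.
rewrite (eq_bigr (fun j => qbreve e p (~: [set j]) / qbreve e p setT)).
  have H := @ratio_main R n e p sg pp fp _ S (leqnn _). exact: H.
move=> j _.
have -> : qbreve e p (~: [set j]) = qS e p set0 + qS e p [set j].
  rewrite -sum_qS -(setU0 [set j]) -/(j |: set0) sum_subU1 ?inE //.
  by rewrite !sum_sub0 setU0.
rewrite qS0; set t := qbreve e p setT in tp *.
by field; rewrite gt_eqF.
Qed.
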